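(* Let $K$ be a solid cone in a vector space with convergence $(Y,\to)$. Then its interior $K^\circ$ satisfies: (i) $\lambda K^\circ\subseteq K^\circ$ for every $\lambda>0$; (ii) $K+K^\circ\subseteq K^\circ$; (iii) $0\notin K^\circ$. Conversely, if $V$ is a nonempty open subset of $K$ satisfying (i)–(iii) (with $K^\circ$ replaced by $V$), then $V$ is the interior of $K$.
   Context: Vector space with convergence: a real vector space $Y$ with a relation $\to$ between sequences in $Y$ and points of $Y$ (write $x_n\to x$; uniqueness of limits not assumed) such that (C1) $x_n\to x$, $y_n\to y$ imply $x_n+y_n\to x+y$; (C2) $x_n\to x$, $\lambda\in\mathbb R$ imply $\lambda x_n\to\lambda x$; (C3) $\lambda_n\to\lambda$ in $\mathbb R$, $x\in Y$ imply $\lambda_n x\to\lambda x$. A set $A\subseteq Y$ is open if $x_n\to x\in A$ implies $x_n\in A$ for all but finitely many $n$; closed if $x_n\to x$ and $x_n\in A$ for all $n$ imply $x\in A$. The interior $A^\circ$ is the union of all open subsets of $Y$ contained in $A$. A cone is a nonempty closed $K\subseteq Y$ with $\lambda K\subseteq K$ for all $\lambda\ge0$, $K+K\subseteq K$, $K\cap(-K)=\{0\}$; it is solid if $K\neq\{0\}$ and $K^\circ\neq\emptyset$. *)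

(* Defs.v *)
From HB Require Import structures.
From mathcomp Require Import all_boot all_order all_algebra.
From mathcomp Require Import reals.
Set Implicit Arguments. Unset Strict Implicit. Unset Printing Implicit Defensive.
Import Order.TTheory GRing.Theory Num.Theory.
Local Open Scope ring_scope.

Definition real_conv (R : realType) (l : nat -> R) (a : R) : Prop :=
  forall e : R, 0 < e -> exists N : nat, forall n : nat, (N <= n)%N -> `|l n - a| < e.

Definition is_convergence (R : realType) (Y : lmodType R)
    (conv : (nat -> Y) -> Y -> Prop) : Prop :=
  [/\ (forall (x y : nat -> Y) (a b : Y), conv x a -> conv y b ->
         conv (fun n => x n + y n) (a + b)),
      (forall (x : nat -> Y) (a : Y) (lam : R), conv x a ->
         conv (fun n => lam *: x n) (lam *: a)) &
      (forall (lam : nat -> R) (l : R) (x : Y), real_conv lam l ->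
         conv (fun n => lam n *: x) (l *: x))].

Section Conv.
Variables (R : realType) (Y : lmodType R) (conv : (nat -> Y) -> Y -> Prop).

Definition cv_open (A : Y -> Prop) : Prop :=
  forall (x : nat -> Y) (a : Y), conv x a -> A a ->
    exists N : nat, forall n : nat, (N <= n)%N -> A (x n).

Definition cv_closed (A : Y -> Prop) : Prop :=
  forall (x : nat -> Y) (a : Y), conv x a -> (forall n, A (x n)) -> A a.

Definition cv_interior (A : Y -> Prop) : Y -> Prop :=
  fun y => exists U : Y -> Prop, [/\ cv_open U, (forall z, U z -> A z) & U y].

Definition is_cone (K : Y -> Prop) : Prop :=
  [/\ exists y, K y,
      cv_closed K,
      (forall (lam : R) (y : Y), 0 <= lam -> K y -> K (lam *: y)),
      (forall y z : Y, K y -> K z -> K (y + z)) &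
      (forall y : Y, K y /\ K (- y) <-> y = 0)].

Definition is_solid_cone (K : Y -> Prop) : Prop :=
  [/\ is_cone K, (exists y, K y /\ y <> 0) & (exists y, cv_interior K y)].

Definition interior_props (K V : Y -> Prop) : Prop :=
  [/\ (forall (lam : R) (y : Y), 0 < lam -> V y -> V (lam *: y)),
      (forall y z : Y, K y -> V z -> V (y + z)) &
      ~ V 0].
End Conv.

(* Main.v *)
Require Import Defs.
From HB Require Import structures.
From mathcomp Require Import all_boot all_order all_algebra.
From mathcomp Require Import reals.
From Stdlib Require Import FunctionalExtensionality.
Import Order.TTheory GRing.Theory Num.Theory.
Local Open Scope ring_scope.

Lemma inv_conv (R : realType) : real_conv (fun n : nat => (n.+1%:R : R)^-1) 0.
Proof.
move=> e e0.
have ie0 : 0 <= e^-1 by rewrite invr_ge0 ltW.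
exists (Num.Def.archi_bound e^-1) => n hn.
rewrite subr0 ger0_norm ?invr_ge0 ?ler0n //.
have h1 := archi_boundP ie0.
have h2 : e^-1 < n.+1%:R.
  apply: (lt_le_trans h1); rewrite ler_nat; by apply: leq_trans hn _.
rewrite -[e]invrK ltf_pV2 // ?posrE ?invr_gt0 ?ltr0n //.
Qed.

Section S.
Variables (R : realType) (Y : lmodType R) (conv : (nat -> Y) -> Y -> Prop).
Hypothesis hc : is_convergence conv.

Lemma conv_const (c : Y) : conv (fun _ => c) c.
Proof.
case: hc => _ _ C3.
have H := C3 (fun _ => 1) 1 c.
have E : (fun _ : nat => (1 : R) *: c) = (fun _ => c).
  by apply: functional_extensionality => n; rewrite scale1r.
rewrite E scale1r in H; apply: H => e e0; exists 0%N => n _; by rewrite subrr normr0.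
Qed.

Lemma conv_tv (y w : Y) : conv (fun n => y + (n.+1%:R : R)^-1 *: w) y.
Proof.
case: hc => C1 _ C3.
have := C1 _ _ _ _ (conv_const y) (C3 _ _ w (inv_conv R)).
by rewrite scale0r addr0.
Qed.

Lemma open_scale (U : Y -> Prop) (lam : R) : 0 < lam -> cv_open conv U ->
  cv_open conv (fun z => exists u, U u /\ z = lam *: u).
Proof.
case: hc => _ C2 _ l0 oU x a cx [u [Uu E]]; subst a.
have := C2 _ _ (lam^-1) cx.
rewrite scalerA mulVf ?gt_eqF // scale1r => /(oU _ _)/(_ Uu) [N HN].
exists N => n /HN Hn; exists (lam^-1 *: x n); split => //.
by rewrite scalerA divff ?gt_eqF // scale1r.
Qed.

Lemma open_trans (U : Y -> Prop) (y : Y) : cv_open conv U ->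
  cv_open conv (fun z => exists u, U u /\ z = y + u).
Proof.
case: hc => C1 _ _ oU x a cx [u [Uu E]]; subst a.
have := C1 _ _ _ _ cx (conv_const (- y)).
rewrite addrC addKr => /(oU _ _)/(_ Uu) [N HN].
exists N => n /HN Hn; exists (x n - y); split => //.
by rewrite addrC subrK.
Qed.
End S.

Theorem theorem3p3 (R : realType) (Y : lmodType R)
    (conv : (nat -> Y) -> Y -> Prop) (K : Y -> Prop) :
  is_convergence conv -> is_solid_cone conv K ->
  interior_props K (cv_interior conv K) /\
  (forall V : Y -> Prop,
     (exists y, V y) -> cv_open conv V -> (forall y, V y -> K y) ->
     interior_props K V ->
     forall y, V y <-> cv_interior conv K y).
Proof.
move=> hc [[_ Kcl Ksc Kadd Kanti] [y0 [Ky0 y0n]] _].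
split.
  split.
  - move=> lam y l0 [U [oU UK Uy]].
    exists (fun z => exists u, U u /\ z = lam *: u); split.
    + exact: (@open_scale R Y conv hc).
    + move=> z [u [Uu ->]]; apply: Ksc; [exact: ltW | exact: UK].
    + by exists y.
  - move=> y z Ky [U [oU UK Uz]].
    exists (fun w => exists u, U u /\ w = y + u); split.
    + exact: (@open_trans R Y conv hc).
    + move=> w [u [Uu ->]]; apply: Kadd => //; exact: UK.
    + by exists z.
  - move=> [U [oU UK U0]].
    have [N HN] := oU _ _ (@conv_tv R Y conv hc 0 (- y0)) U0.
    have := UK _ (HN N (leqnn N)); rewrite add0r => Kt.
    have := Ksc (N.+1%:R) _ (ler0n _ _) Kt.
    rewrite scalerA divff ?pnatr_eq0 // scale1r => Kny.
    by apply: y0n; apply/Kanti.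
move=> V [v Vv] oV VK [Vsc Vadd _] y; split.
  by move=> Vy; exists V.
move=> [U [oU UK Uy]].
have [N HN] := oU _ _ (@conv_tv R Y conv hc y (- v)) Uy.
have Kt := UK _ (HN N (leqnn N)).
have Vt : V ((N.+1%:R : R)^-1 *: v) by apply: Vsc => //; rewrite invr_gt0 ltr0n.
have := Vadd _ _ Kt Vt.
by rewrite scalerN addrNK.
Qed.
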